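(* Let $\alpha,\beta:\mathcal{X}\to\mathcal{Y}$ be two linear maps between vector spaces $\mathcal{X},\mathcal{Y}$ over $\mathbb{R}$. (1) If $\beta(\ker\alpha)\cap\mathrm{im}\,\alpha=\{0\}\subset\mathcal{Y}$, then a generic linear combination $\gamma$ of $\alpha$ and $\beta$ satisfies $\ker\gamma=\ker\alpha\cap\ker\beta$. (2) If $\beta^{\diamondsuit}(\ker\alpha^{\diamondsuit})\cap\mathrm{im}\,\alpha^{\diamondsuit}=\{0\}\subset\mathcal{X}^{\diamondsuit}$, or equivalently $\beta^{-1}(\mathrm{im}\,\alpha)+\ker\alpha=\mathcal{X}$, then a generic linear combination $\gamma$ of $\alpha$ and $\beta$ satisfies $\mathrm{im}\,\gamma=\mathrm{im}\,\alpha+\mathrm{im}\,\beta$.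
   Context: $(\cdot)^{\diamondsuit}$ denotes the dual vector space and dual (transpose) linear map. A generic linear combination of $\alpha$ and $\beta$ means $a\alpha+b\beta$ for $(a,b)$ in an open dense subset of $\mathbb{R}^2$. *)

(* Defs.v *)
From HB Require Import structures.
From mathcomp Require Import all_boot all_order all_algebra.
From mathcomp Require Import all_classical all_reals all_analysis.
Set Implicit Arguments. Unset Strict Implicit. Unset Printing Implicit Defensive.
Import Order.TTheory GRing.Theory Num.Theory.
Import numFieldNormedType.Exports.
Local Open Scope ring_scope.
Local Open Scope classical_set_scope.

Definition generic (R : realType) (P : R -> R -> Prop) : Prop :=
  exists S : set (R * R)%type, open S /\ dense S /\ forall a b, S (a, b) -> P a b.

Definition dualv (R : fieldType) (X : vectType R) := 'Hom(X, R^o).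

Definition dualmap (R : fieldType) (X Y : vectType R) (f : 'Hom(X, Y))
  : 'Hom(dualv Y, dualv X) :=
  linfun (fun phi : 'Hom(Y, R^o) => (phi \o f)%VF).

(* Main.v *)
Require Import Defs.
From HB Require Import structures.
From mathcomp Require Import all_boot all_order all_algebra.
From mathcomp Require Import all_classical all_reals all_analysis.
Import Order.TTheory GRing.Theory Num.Theory.
Local Open Scope ring_scope.
Set Implicit Arguments. Unset Strict Implicit. Unset Printing Implicit Defensive.
Import numFieldNormedType.Exports.
Local Open Scope classical_set_scope.

Lemma avoid_dense (R : realType) (G : seq R) :
  open [set x : R | x \notin G] /\ dense [set x : R | x \notin G].
Proof.
elim: G => [|g G [oG dG]].
  have -> : [set x : R | x \notin [::]] = setT by rewrite predeqE.
  split; first exact: openT.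
  by move=> O O0 _; rewrite setIT.
have -> : [set x : R | x \notin g :: G] = [set x | x != g] `&` [set x | x \notin G].
  by rewrite predeqE => x /=; rewrite in_cons negb_or; split => [/andP[]|[-> ->]].
split; first by apply: openI => //; exact: open_neq.
move=> O O0 oO.
have oOg : open (O `&` [set x | x != g]) by apply: openI => //; exact: open_neq.
have [y [Oy yg]] := dense_set1C g O0 oO.
have [z [[Oz zg] zG]] := dG (O `&` [set x | x != g]) (ex_intro _ y (conj Oy (introN eqP yg))) oOg.
by exists z; split => //; split.
Qed.

Lemma generic_of_seq (R : realType) (F : seq R) (P : R -> R -> Prop) :
  (forall a b : R, a != 0 -> (forall t, t \in F -> b != t * a) -> P a b) -> generic P.
Proof.
move=> HP.
pose g := fun ab : R * R => ab.1 * \prod_(t <- F) (ab.2 - t * ab.1).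
have gS : forall a b, g (a, b) != 0 -> a != 0 /\ (forall t, t \in F -> b != t * a).
  move=> a b; rewrite /g /= mulf_eq0 negb_or => /andP[-> ].
  rewrite prodf_seq_neq0 => /allP H; split=> // t tF; rewrite -subr_eq0; exact: H.
exists (g @^-1` [set x | x != 0]); split; [|split].
- apply: open_comp; last exact: open_neq.
  move=> x _.
  have c1 : {for x, continuous (fun ab : R * R => ab.1)} by exact: cvg_fst.
  have c2 : {for x, continuous (fun ab : R * R => ab.2)} by exact: cvg_snd.
  apply: continuousM => //.
  move: F {HP g gS}; elim => [|t F IH].
    under [X in {for x, continuous X}]eq_fun do rewrite big_nil.
    exact: cvg_cst.
  under [X in {for x, continuous X}]eq_fun do rewrite big_cons.
  apply: (continuousM (s := fun y : R * R => y.2 - t * y.1)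
                      (t := fun y : R * R => \prod_(j <- F) (y.2 - j * y.1))) => //.
  apply: (continuousB (f := fun y : R * R => y.2) (g := fun y : R * R => t * y.1)) => //.
  apply: (continuousM (s := fun y : R * R => t) (t := fun y : R * R => y.1)) => //.
  exact: cvg_cst.
- move=> O [[a0 b0] Oab] oO.
  have := oO _ Oab; rewrite /interior => -[[PA PB] /= [nA nB] sAB].
  have [_ dA] := avoid_dense [:: 0 : R].
  have [a1 [Aa1 /= a10]] := dA _ (ex_intro _ a0 (nbhs_singleton (nbhs_interior nA))) (@open_interior _ PA).
  have [_ dB] := avoid_dense [seq t * a1 | t <- F].
  have [b1 [Bb1 /= b1F]] := dB _ (ex_intro _ b0 (nbhs_singleton (nbhs_interior nB))) (@open_interior _ PB).
  exists (a1, b1); split.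
    by apply: sAB; split; apply: interior_subset.
  rewrite /= /g /= mulf_eq0 negb_or.
  move: a10; rewrite in_cons in_nil orbF => -> /=.
  rewrite prodf_seq_neq0; apply/allP => t tF /=; rewrite subr_eq0.
  apply: contra b1F => /eqP ->; exact: map_f.
- by move=> a b /= /gS [H1 H2]; apply: HP.
Qed.

From mathcomp Require Import ring.

Section Part1.
Variables (R : realType) (X Y : vectType R) (alpha beta : 'Hom(X, Y)).
Hypothesis H1 : ((beta @: lker alpha) :&: limg alpha = 0)%VS.

Lemma H1_use x : alpha x = 0 -> beta x \in limg alpha -> beta x = 0.
Proof.
move=> ax bx; apply/eqP; rewrite -memv0 -H1 memv_cap bx andbT.
by apply: memv_img; rewrite memv_ker ax.
Qed.

Lemma key1 (x : R -> X) (s : seq R) :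
  uniq s ->
  (forall t, t \in s -> [/\ t != 0, alpha (x t) + t *: beta (x t) = 0 & alpha (x t) != 0]) ->
  forall c : R -> R, \sum_(t <- s) c t *: alpha (x t) = 0 -> forall t, t \in s -> c t = 0.
Proof.
elim: s => [|t0 s IH] //= /andP[t0s us] Hs c Hc.
have Hs' : forall t, t \in s -> [/\ t != 0, alpha (x t) + t *: beta (x t) = 0 & alpha (x t) != 0].
  by move=> t ts; apply: Hs; rewrite in_cons ts orbT.
have bx : forall t, t \in t0 :: s -> beta (x t) = - t^-1 *: alpha (x t).
  move=> t ts; have [tn0 e _] := Hs t ts.
  move/eqP: e; rewrite addrC addr_eq0 => /eqP e.
  by rewrite -[beta (x t)]scale1r -(mulVf tn0) -scalerA e scalerN scaleNr.
pose z := \sum_(t <- t0 :: s) c t *: x t.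
have az : alpha z = 0.
  by rewrite /z linear_sum -[RHS]Hc; apply: eq_bigr => t _; exact: linearZ.
pose c2 := fun t => - (c t / t).
have E2 : beta z = alpha (\sum_(t <- t0 :: s) c2 t *: x t).
  rewrite /z !linear_sum; apply: eq_big_seq => t ts.
  by rewrite !linearZ /= bx // scalerA mulrN.
have bz0 : beta z = 0 by apply: H1_use => //; rewrite E2 memv_img ?memvf.
have Hc2 : \sum_(t <- t0 :: s) c2 t *: alpha (x t) = 0.
  rewrite -[RHS]bz0 E2 linear_sum; apply: eq_bigr => t _; by rewrite linearZ.
pose c3 := fun t => c t + t0 * c2 t.
have Hc3 : \sum_(t <- t0 :: s) c3 t *: alpha (x t) = 0.
  rewrite /c3; under eq_bigr do rewrite scalerDl.
  rewrite big_split /= Hc add0r.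
  under eq_bigr do rewrite -scalerA.
  by rewrite -scaler_sumr Hc2 scaler0.
have [t0n0 _ _] := Hs t0 (mem_head _ _).
have c3t0 : c3 t0 = 0 by rewrite /c3 /c2; field.
move: Hc3; rewrite big_cons c3t0 scale0r add0r => /(IH us Hs') c3s.
have cs : forall t, t \in s -> c t = 0.
  move=> t ts; have [tn0 _ _] := Hs' t ts.
  have := c3s t ts; rewrite /c3 /c2 => e.
  have : c t * (t - t0) = 0.
    have -> : c t * (t - t0) = (c t + t0 * - (c t / t)) * t by field.
    by rewrite e mul0r.
  move/eqP; rewrite mulf_eq0 subr_eq0 => /orP[/eqP //|/eqP ett0].
  by move: t0s; rewrite -ett0 ts.
move=> t; rewrite in_cons => /orP[/eqP ->|]; last exact: cs.
move: Hc; rewrite big_cons big1_seq ?addr0; last first.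
  by move=> i /andP[_ iS]; rewrite cs // scale0r.
have [_ _ an0] := Hs t0 (mem_head _ _).
by move/eqP; rewrite scaler_eq0 (negbTE an0) orbF => /eqP.
Qed.


Lemma size_bound (x : R -> X) (s : seq R) :
  uniq s ->
  (forall t, t \in s -> [/\ t != 0, alpha (x t) + t *: beta (x t) = 0 & alpha (x t) != 0]) ->
  (size s <= \dim (fullv : {vspace Y}))%N.
Proof.
move=> us Hs.
pose f := fun t => alpha (x t).
have fr : free (map_tuple f (in_tuple s)).
  apply/freeP => k Hk i.
  pose c := fun t => \sum_(j < size s | nth 0 s j == t) k j.
  have ck : forall j : 'I_(size s), c (nth 0 s j) = k j.
    move=> j; rewrite /c (big_pred1 j) // => l /=.
    by rewrite nth_uniq.
  rewrite -ck; apply: (key1 us Hs); last exact: mem_nth.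
  rewrite (big_nth 0) big_mkord -[RHS]Hk; apply: eq_bigr => j _.
  by rewrite ck /= (nth_map 0).
move: fr; rewrite /free => /eqP; rewrite /= size_map => <-.
exact/dimvS/subvf.
Qed.

End Part1.

Lemma finite_cover (T : eqType) (P : T -> Prop) (N : nat) :
  (forall s : seq T, uniq s -> (forall t, t \in s -> P t) -> (size s <= N)%N) ->
  exists F : seq T, forall t, P t -> t \in F.
Proof.
move=> HN; apply: boolp.contrapT => nF.
have H : forall F : seq T, exists t, P t /\ t \notin F.
  move=> F; apply: boolp.contrapT => nt; apply: nF; exists F => t Pt.
  by apply: boolp.contrapT => tF; apply: nt; exists t; split => //; apply/negP.
have : forall n, exists s, [/\ uniq s, (forall t, t \in s -> P t) & size s = n].
  elim => [|n [s [us Ps ss]]]; first by exists [::].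
  have [t [Pt tS]] := H s; exists (t :: s); split => //=; first by rewrite tS.
    by move=> u; rewrite in_cons => /orP[/eqP ->|/Ps].
  by rewrite ss.
move=> /(_ N.+1) [s [us Ps ss]].
by have := HN s us Ps; rewrite ss ltnn.
Qed.

Lemma part1 (R : realType) (X Y : vectType R) (alpha beta : 'Hom(X, Y)) :
  ((beta @: lker alpha) :&: limg alpha = 0)%VS ->
  generic (fun a b : R => lker (a *: alpha + b *: beta) = (lker alpha :&: lker beta)%VS).
Proof.
move=> H1.
set K := (lker alpha :&: lker beta)%VS.
have Ksub : forall t : R, (K <= lker (alpha + t *: beta)%R)%VS.
  move=> t; apply/subvP => v; rewrite memv_cap !memv_ker => /andP[/eqP a0 /eqP b0].
  by rewrite add_lfunE scale_lfunE a0 b0 scaler0 addr0.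
pose bad := fun t : R => t != 0 /\ lker (alpha + t *: beta) != K.
have ex : forall t, exists v : X, bad t -> (alpha + t *: beta) v = 0 /\ alpha v != 0.
  move=> t; case: (boolp.pselect (bad t)) => [[tn0 ne]|nb]; last by exists 0.
  have : ~~ (lker (alpha + t *: beta)%R <= K)%VS.
    by apply: contra ne => sub; rewrite eqEsubv sub Ksub.
  case/subvPn => v vk vnK; exists v => _; split; first by apply/eqP; rewrite -memv_ker.
  apply: contra vnK => /eqP av; move: vk.
  rewrite memv_ker add_lfunE scale_lfunE av add0r scaler_eq0 (negbTE tn0) /=.
  by rewrite memv_cap !memv_ker av eqxx.
have [x Hx] := boolp.choice ex.
have [F HF] : exists F : seq R, forall t, bad t -> t \in F.
  apply: (@finite_cover _ bad (\dim (fullv : {vspace Y}))) => s us Ps.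
  apply: (size_bound H1 (x := x) us) => t ts.
  have [tn0 ne] := Ps t ts; have [e an0] := Hx t (Ps t ts).
  by split => //; rewrite -e add_lfunE scale_lfunE.
apply: (@generic_of_seq R (0 :: F)) => a b a0 Hb.
have tn0 : b / a != 0.
  by rewrite mulf_neq0 ?invr_eq0 //; have := Hb 0 (mem_head _ _); rewrite mul0r.
have nbad : ~ bad (b / a).
  by move=> /HF tF; move: (Hb (b / a)); rewrite in_cons tF orbT divfK // eqxx => /(_ isT).
have eK : lker (alpha + (b / a) *: beta) = K.
  by apply/eqP; apply: boolp.contrapT => ne; apply: nbad; split => //; apply/negP.
have -> : a *: alpha + b *: beta = a *: (alpha + (b / a) *: beta).
  by rewrite scalerDr scalerA mulrC divfK.
rewrite -eK; apply/vspaceP => v.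
by rewrite !memv_ker scale_lfunE scaler_eq0 (negbTE a0).
Qed.
Section Dual.
Variables (R : realType) (X Y : vectType R).
Definition dcomp (f : 'Hom(X, Y)) := fun phi : 'Hom(Y, R^o) => (phi \o f)%VF.
Fact dcomp_lin f : linear (dcomp f).
Proof. by move=> k p q; rewrite /dcomp comp_lfunDl comp_lfunZl. Qed.
HB.instance Definition _ f := GRing.isLinear.Build R _ _ _ (dcomp f) (dcomp_lin f).
Lemma dualmapE (f : 'Hom(X, Y)) phi : dualmap f phi = (phi \o f)%VF.
Proof. exact: (lfunE (dcomp f)). Qed.
End Dual.

Lemma sep (R : realType) (Y : vectType R) (W : {vspace Y}) v :
  v \notin W -> exists phi : 'Hom(Y, R^o), (forall w, w \in W -> phi w = 0) /\ phi v != 0.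
Proof.
move=> vW.
pose q : 'Hom(Y, Y) := (\1 - projv W)%VF.
have qE : forall y, q y = y - projv W y by move=> y; rewrite /q add_lfunE opp_lfunE id_lfunE.
have qv : q v != 0.
  by rewrite qE subr_eq0; apply: contra vW => /eqP ->; exact: memv_proj.
have [i ci] : exists i, coord (vbasis fullv) i (q v) != 0.
  apply: boolp.contrapT => nex; move/eqP: qv; apply.
  rewrite (coord_vbasis (memvf (q v))) big1 // => i _.
  have -> : coord (vbasis fullv) i (q v) = 0.
    by apply: boolp.contrapT => ne; apply: nex; exists i; apply/eqP.
  by rewrite scale0r.
exists (linfun (coord (vbasis fullv) i : Y -> R^o) \o q)%VF; split.
  by move=> w wW; rewrite comp_lfunE lfunE /= qE projv_id // subrr linear0.
by rewrite comp_lfunE lfunE.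
Qed.

Lemma generic_mono (R : realType) (P Q : R -> R -> Prop) :
  (forall a b, P a b -> Q a b) -> generic P -> generic Q.
Proof. by move=> PQ [S [oS [dS HS]]]; exists S; do 2 split => //; move=> a b /HS /PQ. Qed.

Section Part2.
Variables (R : realType) (X Y : vectType R) (alpha beta : 'Hom(X, Y)).

Lemma H2_H2' :
  ((beta @^-1: limg alpha) + lker alpha = fullv)%VS ->
  ((dualmap beta @: lker (dualmap alpha)) :&: limg (dualmap alpha) = 0)%VS.
Proof.
move=> H2; apply/eqP; rewrite -subv0; apply/subvP => p0.
rewrite memv_cap memv0 => /andP[/memv_imgP[phi phik ->] /memv_imgP[psi _ e]].
apply/eqP/lfunP => x; rewrite zero_lfunE.
have : x \in ((beta @^-1: limg alpha) + lker alpha)%VS by rewrite H2 memvf.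
case/memv_addP => y yP [k kK ->].
move: yP; rewrite -memv_preim => /memv_imgP[u _ bu].
rewrite dualmapE comp_lfunE linearD /= bu.
have h1 : phi (alpha u) = 0.
  by move: phik; rewrite memv_ker dualmapE => /eqP/lfunP/(_ u); rewrite comp_lfunE zero_lfunE.
have h2 : phi (beta k) = 0.
  move/lfunP: e => /(_ k); rewrite !dualmapE !comp_lfunE => ->.
  by move: kK; rewrite memv_ker => /eqP ->; rewrite linear0.
by rewrite linearD /= h1 h2 addr0.
Qed.

Lemma H2'_H2 :
  ((dualmap beta @: lker (dualmap alpha)) :&: limg (dualmap alpha) = 0)%VS ->
  ((beta @^-1: limg alpha) + lker alpha = fullv)%VS.
Proof.
move=> H2'; apply/eqP; rewrite eqEsubv subvf /=.
apply: boolp.contrapT => /negP /subvPn [x _ xU].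
pose W := (limg alpha + beta @: lker alpha)%VS.
have bxW : beta x \notin W.
  apply: contra xU => /memv_addP [y1 /memv_imgP[u _ ->] [y2 /memv_imgP[k kK ->] e]].
  have -> : x = (x - k) + k by rewrite subrK.
  apply: memv_add => //; rewrite -memv_preim linearB /= e addrK.
  exact: memv_img (memvf _).
have [phi [phiW phix]] := sep bxW.
pose psi : 'Hom(Y, R^o) := (phi \o beta \o alpha^-1)%VF.
have phik : phi \in lker (dualmap alpha).
  rewrite memv_ker; apply/eqP/lfunP => u; rewrite dualmapE comp_lfunE zero_lfunE.
  by apply: phiW; rewrite -[alpha u]addr0; apply: memv_add; [exact: memv_img (memvf u) | exact: mem0v].
have e : dualmap beta phi = dualmap alpha psi.
  apply/lfunP => y; rewrite !dualmapE !comp_lfunE.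
  set y' := (alpha^-1)%VF (alpha y).
  have ay : alpha y' = alpha y by rewrite /y' limg_lfunVK // memv_img ?memvf.
  have : phi (beta (y' - y)) = 0.
    apply: phiW; rewrite -[beta _]add0r; apply: memv_add; first exact: mem0v.
    by apply: memv_img; rewrite memv_ker linearB /= ay subrr.
  by rewrite !linearB /= => /eqP; rewrite subr_eq0 => /eqP.
have : dualmap beta phi \in ((dualmap beta @: lker (dualmap alpha)) :&: limg (dualmap alpha))%VS.
  by rewrite memv_cap memv_img //= e memv_img ?memvf.
rewrite H2' memv0 => /eqP e0; move: phix.
by move/lfunP: e0 => /(_ x); rewrite dualmapE comp_lfunE zero_lfunE => ->; rewrite eqxx.
Qed.

Lemma part2concl :
  ((dualmap beta @: lker (dualmap alpha)) :&: limg (dualmap alpha) = 0)%VS ->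
  generic (fun a b : R => limg (a *: alpha + b *: beta) = (limg alpha + limg beta)%VS).
Proof.
move=> H2'; apply: generic_mono (part1 H2') => a b HK.
set g := a *: alpha + b *: beta.
have dg : a *: dualmap alpha + b *: dualmap beta = dualmap g.
  apply/lfunP => phi; rewrite add_lfunE !scale_lfunE !dualmapE.
  by rewrite /g comp_lfunDr -!comp_lfunZr.
apply/eqP; rewrite eqEsubv; apply/andP; split.
  apply/subvP => y /memv_imgP[x _ ->].
  rewrite /g add_lfunE !scale_lfunE.
  by apply: memv_add; apply: memvZ; apply: memv_img; exact: memvf.
apply/subvP => y yS; apply: boolp.contrapT => /negP ny.
have [phi [phiW phiy]] := sep ny.
have : phi \in lker (dualmap g).
  rewrite memv_ker dualmapE; apply/eqP/lfunP => x; rewrite comp_lfunE zero_lfunE.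
  by apply: phiW; apply: memv_img; exact: memvf.
rewrite -dg HK memv_cap !memv_ker !dualmapE => /andP[/eqP/lfunP pa /eqP/lfunP pb].
move: yS => /memv_addP [y1 /memv_imgP[x1 _ ->] [y2 /memv_imgP[x2 _ ->] ey]].
move: phiy; rewrite ey linearD /=.
have := pa x1; have := pb x2; rewrite !comp_lfunE !zero_lfunE => -> ->.
by rewrite addr0 eqxx.
Qed.

End Part2.

Theorem lemma6p1 (R : realType) (X Y : vectType R) (alpha beta : 'Hom(X, Y)) :
  (* (1) *)
  (((beta @: lker alpha) :&: limg alpha = 0)%VS ->
    generic (fun a b : R => lker (a *: alpha + b *: beta) = (lker alpha :&: lker beta)%VS))
  /\
  (* (2): the two hypotheses are equivalent, and imply the conclusion *)
  ((((dualmap beta @: lker (dualmap alpha)) :&: limg (dualmap alpha) = 0)%VS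
     <-> ((beta @^-1: limg alpha) + lker alpha = fullv)%VS)
   /\
   (((dualmap beta @: lker (dualmap alpha)) :&: limg (dualmap alpha) = 0)%VS ->
    generic (fun a b : R => limg (a *: alpha + b *: beta) = (limg alpha + limg beta)%VS))).
Proof.
split; first exact: part1.
split; last exact: part2concl.
split; [exact: H2'_H2 | exact: H2_H2'].
Qed.
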